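(* For a $c$-arc-colored digraph $G$ ($c\ge 2$), there exists a properly colored closed walk in $G$ traversing every arc of $G$ at least once if and only if $G$ is PC trail-connected.
   Context: A digraph $G$ is $c$-arc-colored if it comes with an arbitrary map $\phi:A(G)\to[c]$. Walks are directed. A walk $v_1\dots v_p$ is properly colored (PC) if $\phi(v_iv_{i+1})\ne\phi(v_{i+1}v_{i+2})$ for all $i\in[p-2]$ and, if the walk is closed, also its last and first arcs have different colors. A trail is a walk with no repeated arcs. $G$ is PC trail-connected if for every ordered pair of arcs $f_1,f_2$ of $G$ there is a PC trail whose first arc is $f_1$ and whose last arc is $f_2$. *)

(* Defs.v *)
From mathcomp Require Import all_boot.
Set Implicit Arguments. Unset Strict Implicit. Unset Printing Implicit Defensive.

(* A digraph on a finite vertex set V is an irreflexive relation E : rel V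
   (no loops, no parallel arcs); an arc is a pair (u,v) with E u v.
   A c-arc-coloring is a map phi : V -> V -> 'I_c (only its values on arcs
   matter). A walk v_1 ... v_p is given by its first vertex x and the rest p. *)

Section Walks.
Variables (V : finType) (E : rel V) (c : nat) (phi : V -> V -> 'I_c).

Definition is_arc (a : V * V) : bool := E a.1 a.2.

Definition is_walk (x : V) (p : seq V) : bool := path E x p.

Definition walk_arcs (x : V) (p : seq V) : seq (V * V) := zip (x :: p) p.

Definition walk_colors (x : V) (p : seq V) : seq 'I_c :=
  map (fun a => phi a.1 a.2) (walk_arcs x p).

Definition pc_walk (x : V) (p : seq V) : bool :=
  sorted (fun a b => a != b) (walk_colors x p).

Definition closed_walk (x : V) (p : seq V) : bool :=
  is_walk x p && (p != [::]) && (last x p == x).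

Definition pc_closed_walk (x : V) (p : seq V) : bool :=
  [&& closed_walk x p, pc_walk x p &
      (let cs := walk_colors x p in if cs is c0 :: cs' then c0 != last c0 cs' else false)]
  .
End Walks.

Definition trail (V : finType) (E : rel V) (x : V) (p : seq V) : bool :=
  is_walk E x p && uniq (walk_arcs x p).

Definition pc_trail_connected (V : finType) (E : rel V) (c : nat)
    (phi : V -> V -> 'I_c) : Prop :=
  forall f1 f2 : V * V, is_arc E f1 -> is_arc E f2 ->
    exists (x : V) (p : seq V),
      [/\ trail E x p, pc_walk phi x p,
          ohead (walk_arcs x p) = Some f1 &
          ohead (rev (walk_arcs x p)) = Some f2].

(* Main.v *)
Require Import Defs.
From mathcomp Require Import all_boot.
Set Implicit Arguments. Unset Strict Implicit. Unset Printing Implicit Defensive.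

Definition Rl (V : finType) (c : nat) (phi : V -> V -> 'I_c) (a b : V * V) : bool :=
  (a.2 == b.1) && (phi a.1 a.2 != phi b.1 b.2).

Lemma walk_all (V : finType) (E : rel V) x p :
  is_walk E x p = all (is_arc E) (walk_arcs x p).
Proof. rewrite /is_walk /walk_arcs; elim: p x => //= y p IH x; by rewrite IH. Qed.

Lemma wa_sortedR (V : finType) c (phi : V -> V -> 'I_c) x p :
  pc_walk phi x p -> sorted (Rl phi) (walk_arcs x p).
Proof.
rewrite /pc_walk /walk_colors /walk_arcs.
elim: p x => [|y p IH] x //=. case: p IH => [|z p] IH //=.
move=> /andP[H1 H2]; rewrite /Rl /= eqxx H1 /=. exact: (IH y H2).
Qed.

Lemma wa_of_path (V : finType) c (phi : V -> V -> 'I_c) (a : V * V) s :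
  path (Rl phi) a s -> walk_arcs a.1 (map snd (a :: s)) = a :: s.
Proof.
rewrite /walk_arcs.
elim: s a => [|b s IH] [u v] //= /andP[/andP[/eqP eb _] Hs].
congr cons. rewrite /= in eb; rewrite eb; exact: (IH b Hs).
Qed.

Lemma pc_of_path (V : finType) c (phi : V -> V -> 'I_c) (a : V * V) s :
  path (Rl phi) a s -> pc_walk phi a.1 (map snd (a :: s)).
Proof.
move=> H; rewrite /pc_walk /walk_colors (wa_of_path H) sorted_map.
apply: sub_sorted (H : sorted _ (a :: s)) => u w /andP[].
by [].
Qed.

Lemma last_wa (V : finType) x y p :
  (last (x, y) (walk_arcs y p)).2 = last y p :> V.
Proof. rewrite /walk_arcs; elim: p x y => //= z p IH x y; exact: IH. Qed.

Lemma ohead_rev (T : Type) (a : T) s : ohead (rev (a :: s)) = Some (last a s).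
Proof.
case/lastP: s => [|s b] //=. by rewrite -rcons_cons rev_rcons last_rcons.
Qed.

Lemma mem_split (T : eqType) (x : T) s : x \in s -> exists s1 s2, s = s1 ++ x :: s2.
Proof. by case/splitPr => s1 s2; exists s1, s2. Qed.

Lemma cyc_path (V : finType) c (phi : V -> V -> 'I_c) (s : seq (V * V)) f1 f2 :
  cycle (Rl phi) s -> f1 \in s -> f2 \in s ->
  exists w, [/\ path (Rl phi) f1 w, {subset w <= s} & last f1 w = f2].
Proof.
move=> Hc H1 H2; case: (mem_split H1) => p1 [p2 Es]; subst s.
move: Hc; rewrite -(rot_cycle (size p1)) rot_size_cat /= rcons_path => /andP[Hp _].
have [E21|N21] := eqVneq f2 f1.
  by exists [::]; split.
have Hq : f2 \in p2 ++ p1.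
  by move: H2; rewrite !mem_cat inE (negbTE N21) /= orbC.
case: (mem_split Hq) => q1 [q2 Eq].
exists (rcons q1 f2); split.
- by move: Hp; rewrite Eq cat_path rcons_path /= => /andP[-> /andP[->]].
- move=> z; rewrite mem_rcons inE => /orP[/eqP->//|Hz].
  have : z \in p2 ++ p1 by rewrite Eq mem_cat Hz.
  by rewrite !mem_cat inE => /orP[->|->]; rewrite ?orbT.
- by rewrite last_rcons.
Qed.

Lemma trail_of (V : finType) (E : rel V) c (phi : V -> V -> 'I_c) (f1 : V * V) w :
  is_arc E f1 -> all (is_arc E) w -> path (Rl phi) f1 w ->
  exists (x : V) (p : seq V),
      [/\ trail E x p, pc_walk phi x p,
          ohead (walk_arcs x p) = Some f1 &
          ohead (rev (walk_arcs x p)) = Some (last f1 w)].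
Proof.
move=> Hf Hw Hp; case: (shortenP Hp) => w' Hp' Hu Hsub.
exists f1.1, (map snd (f1 :: w')); rewrite /trail walk_all !(wa_of_path Hp') ohead_rev.
split => //; last exact: pc_of_path.
rewrite Hu andbT /= Hf /=; apply/allP => z /Hsub Hz; exact: (allP Hw).
Qed.

Lemma forward (V : finType) (E : rel V) c (phi : V -> V -> 'I_c) x p :
  pc_closed_walk E phi x p ->
  (forall a : V * V, is_arc E a -> a \in walk_arcs x p) ->
  pc_trail_connected E phi.
Proof.
case/and3P => /andP[/andP[Hw Hne] /eqP Hl] Hpc Hcol Hcov f1 f2 H1 H2.
case: p Hne Hw Hl Hpc Hcol Hcov => [//|y p] _ Hw Hl Hpc Hcol Hcov.
have Hc : cycle (Rl phi) (walk_arcs x (y :: p)).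
  rewrite /= rcons_path; apply/andP; split.
    exact: (wa_sortedR Hpc).
  rewrite /Rl; apply/andP; split.
    by rewrite last_wa /= -Hl.
  have Hm := last_map (fun a : V * V => phi a.1 a.2) (walk_arcs y p) (x, y).
  simpl in Hm; move: Hcol; rewrite /walk_colors /= -/(walk_arcs y p) Hm.
  by rewrite eq_sym.
have Hall := Hw; rewrite walk_all in Hall.
case: (cyc_path Hc (Hcov _ H1) (Hcov _ H2)) => w [Hp Hsub Hlast].
rewrite -Hlast; apply: trail_of => //.
apply/allP => z /Hsub Hz; exact: (allP Hall).
Qed.

Lemma build (V : finType) (E : rel V) c (phi : V -> V -> 'I_c) :
  pc_trail_connected E phi -> forall a l, is_arc E a -> all (is_arc E) l ->
  exists w, [/\ path (Rl phi) a w, all (is_arc E) w, last a w = last a l &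
                {subset a :: l <= a :: w}].
Proof.
move=> Hcon a l; elim: l a => [|b l IH] a Ha Hl.
  by exists [::]; split.
case/andP: Hl => Hb Hl.
case: (Hcon a b Ha Hb) => x [p [/andP[Hw _] Hpc Hh Ht]].
have Hs := wa_sortedR Hpc; move: Hw Hs Ht Hh; rewrite walk_all.
case: (walk_arcs x p) => [//|a' u] Hall Hpu Ht [Ea]; subst a'.
rewrite ohead_rev in Ht; case: Ht => Ht.
case: (IH b Hb Hl) => w [Hpw Haw Hlw Hsw].
exists (u ++ w); split.
- by rewrite cat_path Ht Hpw andbT.
- by rewrite all_cat Haw andbT; case/andP: Hall.
- by rewrite last_cat Ht Hlw.
- move=> z; rewrite inE => /orP[/eqP->|]; first exact: mem_head.
  move/Hsw; rewrite !inE mem_cat => /orP[/eqP->|->]; last by rewrite !orbT.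
  by have := mem_last a u; rewrite Ht inE => /orP[->|->]; rewrite ?orbT.
Qed.

Lemma mem_rc (T : eqType) (x a : T) s : (x \in a :: rcons s a) = (x \in a :: s).
Proof. by rewrite !inE mem_rcons inE; case: (x == a). Qed.

Theorem lemma1 (V : finType) (E : rel V) (c : nat) (phi : V -> V -> 'I_c) :
  irreflexive E -> 2 <= c ->
  1 < #|[pred a : V * V | is_arc E a]| ->
  (exists (x : V) (p : seq V),
      pc_closed_walk E phi x p /\
      forall a : V * V, is_arc E a -> a \in walk_arcs x p)
  <-> pc_trail_connected E phi.
Proof.
move=> _ _ Hcard; split.
  by case=> x [p [H1 H2]]; exact: forward H1 H2.
move=> Hcon.
move: Hcard; rewrite cardE.
have Hu := enum_uniq [pred a : V * V | is_arc E a].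
have Hm := mem_enum [pred a : V * V | is_arc E a].
case: (enum _) Hu Hm => [|a1 [|a2 A]] //= /andP[Hn1 _] Hm _.
have Ha1 : is_arc E a1 by have := Hm a1; rewrite inE eqxx /= => /esym.
have Hall : all (is_arc E) (rcons (a2 :: A) a1).
  apply/allP => z; rewrite mem_rcons => Hz.
  by have := Hm z; rewrite Hz => /esym.
case: (build Hcon Ha1 Hall) => w [Hpw Haw Hlw Hsw].
rewrite last_rcons in Hlw.
have Hw2 : a2 \in w.
  have := Hsw a2; rewrite !inE mem_rcons !inE eqxx orbT /= => /(_ isT).
  by case/orP => // /eqP E2; move: Hn1; rewrite E2 inE eqxx.
case/lastP: w Hpw Haw Hlw Hsw Hw2 => [//|w0 b] Hpw Haw Hlw Hsw _.
rewrite last_rcons in Hlw; subst b.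
move: Hpw; rewrite rcons_path => /andP[Hp0 HR].
exists a1.1, (map snd (a1 :: w0)); split.
- case/andP: HR => /eqP H1 H2.
  have Hw0 : all (is_arc E) w0 by move: Haw; rewrite all_rcons => /andP[].
  have Hcol : let cs := walk_colors phi a1.1 (map snd (a1 :: w0)) in
              if cs is c0 :: cs' then c0 != last c0 cs' else false.
    rewrite /walk_colors (wa_of_path Hp0) /=.
    have Hm' := last_map (fun a : V * V => phi a.1 a.2) w0 a1.
    simpl in Hm'; rewrite Hm' eq_sym; exact: H2.
  apply/and3P; split; [|exact: pc_of_path|exact: Hcol].
  rewrite /closed_walk walk_all.
  rewrite (wa_of_path Hp0) /= Ha1 Hw0 /=.
  by rewrite (last_map snd) H1 eqxx.
- move=> a Ha; rewrite (wa_of_path Hp0).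
  have Ha' : a \in [:: a1, a2 & A] by rewrite Hm.
  have : a \in a1 :: rcons (a2 :: A) a1 by rewrite mem_rc.
  by move/Hsw; rewrite mem_rc.
Qed.
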